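(* Let $\mathcal G=(\mathcal V,\mathcal E)$ be a finite undirected graph with finite label sets $\mathcal X_v$ and costs $\theta$ (unary $\theta_u$, pairwise $\theta_{uv}$). Let $\mathcal A,\mathcal B$ be a partition of $\mathcal G$, and let $\mathcal A'$ be an induced subgraph of $\mathcal G$ such that $\mathcal B$ is boundary complement to $\mathcal A'$ with respect to $\mathcal G$, and suppose $\mathcal V_{\mathcal A}\subseteq\mathcal V_{\mathcal A'}\subseteq\mathrm{SAC}(\theta)$. Let $x'\in\arg\min_{x\in\mathcal X_{\mathcal V_{\mathcal A'}}}E_{\mathcal A'}(\theta,x)$ and $x''\in\arg\min_{x\in\mathcal X_{\mathcal V_{\mathcal B}}}E_{\mathcal B}(\theta,x)$. If $x'_v=x''_v$ for all $v\in\mathcal V_{\partial\mathcal A'}$, then, writing $x'_{\mathcal A}$ for the restriction of $x'$ to $\mathcal V_{\mathcal A}$: $x'_{\mathcal A}\in\arg\min_{x\in\mathcal X_{\mathcal V_{\mathcal A}}}E_{\mathcal A}(\theta,x)$, and for every edge $uv\in\mathcal E$ with $u\in\mathcal V_{\mathcal A}$, $v\in\mathcal V_{\mathcal B}$ it holds that $(x'_u,x''_v)\in\arg\min_{(s,t)\in\mathcal X_u\times\mathcal X_v}\theta_{uv}(s,t)$.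
   Context: For $\mathcal V'\subseteq\mathcal V$, $\mathcal X_{\mathcal V'}=\prod_{v\in\mathcal V'}\mathcal X_v$. A subgraph induced by $\mathcal V'$ contains all edges of $\mathcal G$ between nodes of $\mathcal V'$; a partition $\mathcal A,\mathcal B$ of $\mathcal G$ consists of the subgraphs induced by two disjoint node sets covering $\mathcal V$. For a subgraph $\mathcal H$, $E_{\mathcal H}(\theta,x)=\sum_{u\in\mathcal V_{\mathcal H}}\theta_u(x_u)+\sum_{uv\in\mathcal E_{\mathcal H}}\theta_{uv}(x_u,x_v)$. For an induced subgraph $\mathcal A'$, $\mathcal V_{\partial\mathcal A'}=\{v\in\mathcal V_{\mathcal A'}\mid\exists uv\in\mathcal E: u\in\mathcal V\setminus\mathcal V_{\mathcal A'}\}$, and a subgraph is boundary complement to $\mathcal A'$ w.r.t. $\mathcal G$ if it is the subgraph induced by $(\mathcal V\setminus\mathcal V_{\mathcal A'})\cup\mathcal V_{\partial\mathcal A'}$. A node $u$ is strictly arc-consistent w.r.t. $\theta$ if there exist a label $x_u\in\mathcal X_u$ and labels $x_v\in\mathcal X_v$ for all neighbours $v$ of $u$ such that $\theta_u(x_u)<\theta_u(s)$ for all $s\ne x_u$ and $\theta_{uv}(x_u,x_v)<\theta_{uv}(s,t)$ for all $(s,t)\ne(x_u,x_v)$; $\mathrm{SAC}(\theta)$ denotes the set of strictly arc-consistent nodes. *)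

(* Defs.v *)
From mathcomp Require Import all_boot all_order all_algebra.
Set Implicit Arguments. Unset Strict Implicit. Unset Printing Implicit Defensive.
Import Order.TTheory GRing.Theory Num.Theory.
Local Open Scope ring_scope.

(* Encoding:
   - nodes: V : finType; edges: an edge type Ed : finType with endpoints
     src e, dst e (each undirected edge is stored once, with an arbitrary
     orientation); simple graph = no loops, no parallel edges.
   - labels: all label sets X v are subsets of a common finite type L;
     a labeling of a node set S is any x : V -> L with x v \in X v on S
     (values outside S are irrelevant).
   - costs: unary thu v : L -> R, pairwise thp e : L -> L -> R, where
     thp e s t is theta_{uv}(s,t) for u = src e, v = dst e. *)

Section Defs.
Variables (R : realDomainType) (V L Ed : finType).
Variables (src dst : Ed -> V) (X : V -> {set L}).
Variables (thu : V -> L -> R) (thp : Ed -> L -> L -> R).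

Definition simple_graph : Prop :=
  (forall e, src e != dst e) /\
  (forall e1 e2, ((src e1 == src e2) && (dst e1 == dst e2)) ||
                 ((src e1 == dst e2) && (dst e1 == src e2)) -> e1 = e2).

Definition labeling_on (S : {set V}) (x : V -> L) : Prop :=
  forall v, v \in S -> x v \in X v.

Definition energy (S : {set V}) (x : V -> L) : R :=
  \sum_(u in S) thu u (x u) +
  \sum_(e : Ed | (src e \in S) && (dst e \in S)) thp e (x (src e)) (x (dst e)).

Definition is_argmin (S : {set V}) (x : V -> L) : Prop :=
  labeling_on S x /\
  forall y, labeling_on S y -> energy S x <= energy S y.

Definition boundary (S : {set V}) : {set V} :=
  [set v in S | [exists e : Ed,
     ((src e == v) && (dst e \notin S)) || ((dst e == v) && (src e \notin S))]].

Definition boundary_complement (S : {set V}) : {set V} :=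
  (~: S) :|: boundary S.

Definition strictly_arc_consistent (u : V) : Prop :=
  exists y : V -> L,
    [/\ y u \in X u,
        (forall s, s \in X u -> s != y u -> thu u (y u) < thu u s) &
        (forall e, (src e == u) || (dst e == u) ->
           [/\ y (src e) \in X (src e), y (dst e) \in X (dst e) &
               forall s t, s \in X (src e) -> t \in X (dst e) ->
                 (s, t) != (y (src e), y (dst e)) ->
                 thp e (y (src e)) (y (dst e)) < thp e s t])].

Definition is_argmin_pair (e : Ed) (s0 t0 : L) : Prop :=
  [/\ s0 \in X (src e), t0 \in X (dst e) &
      forall s t, s \in X (src e) -> t \in X (dst e) ->
        thp e s0 t0 <= thp e s t].

End Defs.

(* Main.v *)
Require Import Defs.
From mathcomp Require Import all_boot all_order all_algebra.
From Stdlib Require Import ClassicalEpsilon.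
Import Order.TTheory GRing.Theory Num.Theory.
Local Open Scope ring_scope.

Theorem proposition3 (R : realDomainType) (V L Ed : finType)
  (src dst : Ed -> V) (X : V -> {set L})
  (thu : V -> L -> R) (thp : Ed -> L -> L -> R)
  (A B A' : {set V}) (x' x'' : V -> L) :
  simple_graph src dst ->
  (* A, B is a partition of G *)
  [disjoint A & B] -> A :|: B = setT ->
  (* B is boundary complement to A' *)
  B = boundary_complement src dst A' ->
  (* V_A \subseteq V_A' \subseteq SAC(theta) *)
  A \subset A' ->
  (forall u, u \in A' -> strictly_arc_consistent src dst X thu thp u) ->
  is_argmin src dst X thu thp A' x' ->
  is_argmin src dst X thu thp B x'' ->
  (forall v, v \in boundary src dst A' -> x' v = x'' v) ->
  is_argmin src dst X thu thp A x' /\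
  (forall e : Ed,
     (src e \in A -> dst e \in B ->
        is_argmin_pair src dst X thp e (x' (src e)) (x'' (dst e))) /\
     (dst e \in A -> src e \in B ->
        is_argmin_pair src dst X thp e (x'' (src e)) (x' (dst e)))).
Proof.
move=> _ disAB _ defB sAA' HSAC [labx' minx'] _ bd.
have hy : forall v, exists y : V -> L, v \in A' ->
    [/\ y v \in X v,
        (forall s, s \in X v -> s != y v -> thu v (y v) < thu v s) &
        (forall e, (src e == v) || (dst e == v) ->
           [/\ y (src e) \in X (src e), y (dst e) \in X (dst e) &
               forall s t, s \in X (src e) -> t \in X (dst e) ->
                 (s, t) != (y (src e), y (dst e)) ->
                 thp e (y (src e)) (y (dst e)) < thp e s t])].
  move=> v; case: (boolP (v \in A')) => hv.
    by have [y Hy] := HSAC v hv; exists y.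
  by exists x' => hv'; case/negP: hv.
pose Y v := proj1_sig (constructive_indefinite_description _ (hy v)).
have HY v := proj2_sig (constructive_indefinite_description _ (hy v)).
pose z v := Y v v.
have zX v : v \in A' -> z v \in X v by move=> /HY [].
have zU v s : v \in A' -> s \in X v -> s != z v -> thu v (z v) < thu v s.
  by move=> /HY [_ H _]; exact: H.
have zUle v s : v \in A' -> s \in X v -> thu v (z v) <= thu v s.
  move=> hv hs; case: (eqVneq s (z v)) => [->//|ne]; exact/ltW/zU.
have zP e s t : src e \in A' -> dst e \in A' -> s \in X (src e) -> t \in X (dst e) ->
    (s, t) != (z (src e), z (dst e)) -> thp e (z (src e)) (z (dst e)) < thp e s t.
  move=> hs hd.
  have [_ _ /(_ e (introT orP (or_introl (eqxx _)))) [a1 a2 P1]] := HY _ hs.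
  have [_ _ /(_ e (introT orP (or_intror (eqxx _)))) [b1 b2 P2]] := HY _ hd.
  have E : (Y (src e) (src e), Y (src e) (dst e)) = (Y (dst e) (src e), Y (dst e) (dst e)).
    apply/eqP; apply/negPn/negP => ne.
    have lt1 := P1 _ _ b1 b2 ltac:(by rewrite eq_sym).
    have lt2 := P2 _ _ a1 a2 ne.
    by have := lt_trans lt1 lt2; rewrite ltxx.
  case: E => E1 E2.
  rewrite /z -[Y (dst e) (dst e)]E2; exact: P1.
have zPle e s t : src e \in A' -> dst e \in A' -> s \in X (src e) -> t \in X (dst e) ->
    thp e (z (src e)) (z (dst e)) <= thp e s t.
  move=> hs hd h1 h2; case: (eqVneq (s, t) (z (src e), z (dst e))) => [[-> ->]//|ne].
  exact/ltW/zP.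
have xz v : v \in A' -> x' v = z v.
  move=> hv; apply/eqP; apply/negPn/negP => ne.
  have labz : labeling_on X A' z by move=> w /zX.
  have := minx' z labz; rewrite /energy.
  apply/negP; rewrite -ltNge.
  apply: ltr_leD.
    rewrite (bigD1 v hv) [X in _ < X](bigD1 v hv) /=.
    apply: ltr_leD; first exact: zU (labx' _ hv) ne.
    apply: ler_sum => w /andP [hw _]; exact: zUle (labx' _ hw).
  apply: ler_sum => e /andP [h1 h2]; exact: zPle (labx' _ h1) (labx' _ h2).
have pairx e : src e \in A' -> dst e \in A' ->
    is_argmin_pair src dst X thp e (x' (src e)) (x' (dst e)).
  move=> h1 h2; rewrite !xz //; split; [exact: zX | exact: zX |].
  by move=> s t hs ht; exact: zPle.
split.
  split; first by move=> v hv; apply: labx'; exact: (subsetP sAA').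
  move=> y laby; rewrite /energy; apply: lerD.
    apply: ler_sum => v hv; have hv' := subsetP sAA' _ hv.
    by rewrite xz //; exact: zUle (laby _ hv).
  apply: ler_sum => e /andP [h1 h2].
  have [_ _ P] := pairx e (subsetP sAA' _ h1) (subsetP sAA' _ h2).
  exact: P (laby _ h1) (laby _ h2).
have notB v : v \in A -> v \in B -> False.
  by move=> h1 h2; have := disjointFr disAB h1; rewrite h2.
move=> e; split => h1 h2.
- have hs := subsetP sAA' _ h1.
  have hd : dst e \in A'.
    apply/negPn/negP => hd; apply: (notB _ h1).
    rewrite defB /boundary_complement inE; apply/orP; right.
    rewrite inE hs /=; apply/existsP; exists e; by rewrite eqxx hd.
  have hb : dst e \in boundary src dst A'.
    by move: h2; rewrite defB /boundary_complement !inE hd.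
  rewrite -bd //; exact: pairx.
- have hd := subsetP sAA' _ h1.
  have hs : src e \in A'.
    apply/negPn/negP => hs; apply: (notB _ h1).
    rewrite defB /boundary_complement inE; apply/orP; right.
    rewrite inE hd /=; apply/existsP; exists e; by rewrite eqxx hs orbT.
  have hb : src e \in boundary src dst A'.
    by move: h2; rewrite defB /boundary_complement !inE hs.
  rewrite -bd //; exact: pairx.
Qed.
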